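(* A finite simple graph $G$ is pseudo-Gorenstein$^{*}$ if and only if $P_G(-1)=(-1)^{\alpha(G)}$.
   Context: Let $G$ be a finite simple graph on vertex set $[N]$, $K$ a field, $S=K[x_1,\dots,x_N]$, and $I(G)\subset S$ the edge ideal generated by $x_ix_j$ for $\{i,j\}\in E(G)$. Let $\alpha(G)$ be the independence number (which equals $\dim S/I(G)$). The Hilbert series of $S/I(G)$ is written uniquely as $(h_0+h_1t+\dots+h_st^s)/(1-t)^{\alpha(G)}$ with $h_s\neq 0$; the numerator $h_G(t)$ is the $h$-polynomial. The $\mathfrak a$-invariant is $\mathfrak a(G)=\deg h_G(t)-\alpha(G)$. $G$ is called pseudo-Gorenstein$^{*}$ if $h_s=1$ and $\mathfrak a(G)=0$. The independence polynomial is $P_G(x)=\sum_i g_ix^i$, where $g_i$ is the number of independent sets of $G$ of size $i$. *)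

(* Defs.v *)
From mathcomp Require Import all_boot all_order all_algebra.
Set Implicit Arguments. Unset Strict Implicit. Unset Printing Implicit Defensive.
Import GRing.Theory Num.Theory.

(* A finite simple graph: vertex type T : finType, edge relation e : rel T,
   assumed symmetric and irreflexive (hypotheses of the theorem). *)

Section Graph.
Variables (T : finType) (e : rel T).

Definition indep (A : {set T}) : bool :=
  [forall x in A, forall y in A, ~~ e x y].

Definition alpha : nat := \max_(A : {set T} | indep A) #|A|.

Definition indep_poly : {poly int} :=
  \sum_(A : {set T} | indep A) 'X^#|A|.

(* support of a monomial (exponent vector) *)
Definition msupp d (m : {ffun T -> 'I_d.+1}) : {set T} := [set v | m v != ord0].

(* Hilbert function of S/I(G) in degree d: the number of monomials of degree d
   not lying in the monomial ideal I(G), i.e. whose support is independent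
   (these monomials form a K-basis of (S/I(G))_d). *)
Definition hilb (d : nat) : nat :=
  #|[set m : {ffun T -> 'I_d.+1} | (\sum_(v : T) (m v : nat) == d)%N
                                   && indep (msupp m)]|.

(* coefficients of the h-polynomial: the power series (1-t)^alpha * HS(t),
   where HS(t) = sum_d hilb d t^d *)
Definition hcoef (d : nat) : int :=
  \sum_(i < d.+1) (-1) ^+ i * ('C(alpha, i))%:Z * (hilb (d - i))%:Z.

(* pseudo-Gorenstein*: the h-polynomial has degree s = alpha (a-invariant 0)
   and leading coefficient h_s = 1. *)
Definition pseudo_gorenstein_star : Prop :=
  hcoef alpha = 1 /\ (forall d, (alpha < d)%N -> hcoef d = 0).

End Graph.

(* Main.v *)
Require Import Defs.
From mathcomp Require Import all_boot all_order all_algebra.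
From mathcomp Require Import ring.
Import GRing.Theory Num.Theory.
Local Open Scope ring_scope.

Lemma trunc_pow (p h : {poly int}) m k :
  exists h', (p + 'X^m * h) ^+ k = p ^+ k + 'X^m * h'.
Proof.
elim: k => [|k [h' IH]]; first by exists 0; rewrite !expr0 mulr0 addr0.
exists (h' * p + p ^+ k * h + 'X^m * h' * h).
rewrite exprSr IH exprSr.
clear IH; move: (p ^+ k) ('X^m : {poly int}) (h' : {poly int}) => a b c; ring.
Qed.

Lemma coef_trunc (q p h : {poly int}) m i :
  (i < m)%N -> (q * (p + 'X^m * h))`_i = (q * p)`_i.
Proof.
move=> him; rewrite mulrDr coefD mulrCA coefXnM him addr0 //.
Qed.

Definition gp n : {poly int} := \sum_(j < n) 'X^(j.+1).

Lemma gp_mul n : (1 - 'X) * gp n = 'X - 'X^(n.+1).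
Proof.
elim: n => [|n IH]; first by rewrite /gp big_ord0 mulr0 expr1 subrr.
rewrite /gp big_ord_recr /= mulrDr -/(gp n) IH !exprS.
move: ('X : {poly int}) ('X^n : {poly int}) => x y; ring.
Qed.

Lemma gp_ext n k : exists h, gp (n + k) = gp n + 'X^(n.+1) * h.
Proof.
elim: k => [|k [h IH]]; first by exists 0; rewrite addn0 mulr0 addr0.
exists (h + 'X^k).
rewrite addnS /gp big_ord_recr /= -/(gp (n + k)) IH mulrDr -exprD addSn -addrA.
by [].
Qed.

Lemma coef_1mX a i : ((1 - 'X) ^+ a : {poly int})`_i = (-1) ^+ i * ('C(a, i))%:Z.
Proof.
rewrite addrC exprD1n coef_sum.
have hX j : (- 'X : {poly int}) ^+ j = (-1) ^+ j *: 'X^j.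
  by rewrite -scaleN1r exprZn.
under eq_bigr => j _ do rewrite coefMn hX coefZ coefXn.
case: (ltnP i a.+1) => hi.
  rewrite (bigD1 (Ordinal hi)) //= eqxx mulr1 big1 ?addr0.
    by rewrite -mulr_natr natz.
  move=> j hj.
  case: eqP => [hij|]; last by rewrite mulr0 mul0rn.
  by case/eqP: hj; apply/val_inj.
rewrite bin_small // mulr0 big1 // => j _.
case: eqP => [hij|]; last by rewrite mulr0 mul0rn.
by move: (ltn_ord j); rewrite -hij ltnNge hi.
Qed.

Lemma main_coef a k d : (k <= a)%N -> (a <= d)%N ->
  ((1 - 'X) ^+ a * (gp d) ^+ k : {poly int})`_d = (-1) ^+ (d - k) * ('C(a - k, d - k))%:Z.
Proof.
move=> hka had.
rewrite -(subnK hka) exprD -mulrA -exprMn gp_mul.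
rewrite (_ : 'X - 'X^(d.+1) = 'X + 'X^(d.+1) * -1); last by rewrite mulrN1.
have [h' ->] := trunc_pow 'X (-1) d.+1 k.
rewrite coef_trunc // coefMXn ltnNge (leq_trans hka had) /= coef_1mX.
by rewrite addnK.
Qed.

Lemma gp_coef_stable n D k : (n <= D)%N -> ((gp D) ^+ k)`_n = ((gp n) ^+ k)`_n.
Proof.
move=> hnD; rewrite -(subnKC hnD).
have [h ->] := gp_ext n (D - n).
have [h' ->] := trunc_pow (gp n) h n.+1 k.
by rewrite -[_ ^+ k + _]mul1r coef_trunc // mul1r.
Qed.
Lemma cA_coef (T : finType) (A : {set T}) n :
  (#|[set m : {ffun T -> 'I_n.+1} | (\sum_(v : T) (m v : nat) == n)%N && (msupp m == A)]|)%:Z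
  = ((gp n) ^+ #|A|)`_n.
Proof.
pose F (v : T) (j : 'I_n.+1) : {poly int} := if (j != ord0) == (v \in A) then 'X^j else 0.
have E : \prod_(v : T) \sum_(j : 'I_n.+1) F v j = (gp n) ^+ #|A|.
  rewrite -prodr_const [RHS]big_mkcond /=.
  apply: eq_bigr => v _; rewrite big_ord_recl /F /=.
  case: (v \in A); rewrite ?eqxx /=.
    rewrite add0r; apply: eq_bigr => i _.
    by rewrite /bump.
  by rewrite expr0 big1_eq addr0.
rewrite -E bigA_distr_bigA coef_sum /=.
rewrite -sum1_card -natz natr_sum big_mkcond /=.
apply: eq_bigr => f _; rewrite in_set.
case: (boolP [forall v, (f v != ord0) == (v \in A)]) => hall.
  rewrite (eq_bigr (fun v => 'X^(f v))); last by move=> v _; rewrite /F (forallP hall v).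
  rewrite prodrXr coefXn eq_sym.
  have -> : msupp f == A.
    by apply/eqP/setP => v; rewrite in_set; exact: (eqP (forallP hall v)).
  by rewrite andbT; case: (_ == _).
move/forallPn: hall => [v hv].
rewrite [\prod_i _](bigD1 v) //= /F (negbTE hv) mul0r coef0.
have -> : msupp f == A = false.
  apply/negbTE; apply: contra hv => /eqP <-; by rewrite in_set.
by rewrite andbF.
Qed.

Lemma hilb_split (T : finType) (e : rel T) n :
  (hilb e n)%:Z = \sum_(A | indep e A) ((gp n) ^+ #|A|)`_n.
Proof.
rewrite /hilb -sum1_card (partition_big (fun m => msupp m) (indep e)) /=; last first.
  by move=> m; rewrite in_set => /andP[].
rewrite -natz natr_sum; apply: eq_bigr => A hA.
rewrite natz -cA_coef -sum1_card; congr Posz; apply: eq_bigl => m.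
rewrite !in_set.
by case: (msupp m =P A) => [->|_]; rewrite ?hA ?andbT ?andbF.
Qed.

Lemma hcoef_eq (T : finType) (e : rel T) d :
  hcoef e d = \sum_(A | indep e A) ((1 - 'X) ^+ alpha e * (gp d) ^+ #|A|)`_d.
Proof.
rewrite /hcoef.
under eq_bigr => i _ do rewrite hilb_split -coef_1mX mulr_sumr.
rewrite exchange_big /=; apply: eq_bigr => A _.
rewrite coefM; apply: eq_bigr => i _.
by rewrite (gp_coef_stable (d - i) d) // leq_subr.
Qed.

Lemma sign_sq k : (-1) ^+ k * (-1) ^+ k = 1 :> int.
Proof. by rewrite -exprD addnn -signr_odd odd_double expr0. Qed.

Theorem corollary1p4 (T : finType) (e : rel T)
    (e_sym : symmetric e) (e_irr : irreflexive e) :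
  pseudo_gorenstein_star e <-> (indep_poly e).[-1] = (-1) ^+ alpha e.
Proof.
have hk A : indep e A -> (#|A| <= alpha e)%N.
  by move=> hA; rewrite /alpha; exact: (leq_bigmax_cond (P := indep e) (F := fun B : {set T} => #|B|) A hA).
have hgt d : (alpha e < d)%N -> hcoef e d = 0.
  move=> hd; rewrite hcoef_eq big1 // => A hA.
  have hkA := hk A hA.
  rewrite main_coef // ?(ltnW hd) // bin_small ?mulr0 //.
  by apply: ltn_sub2r => //; apply: leq_ltn_trans hd.
have key : hcoef e (alpha e) = (-1) ^+ alpha e * (indep_poly e).[-1].
  rewrite hcoef_eq /indep_poly horner_sum mulr_sumr; apply: eq_bigr => A hA.
  rewrite main_coef // ?hk // binn mulr1 hornerXn.
  rewrite -{2}(subnK (hk A hA)) exprD -mulrA sign_sq mulr1 //.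
split.
  move=> [h1 _].
  by rewrite -[LHS](signrMK (alpha e)) -key h1 mulr1.
move=> hP; split; last exact: hgt.
by rewrite key hP sign_sq.
Qed.
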